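(* Let $A$ be a finite multiset of $n$ points in $\mathbb{R}^d$ with mean $\mu$, $\varepsilon>0$ and $\gamma>0$. Let $P\subset\mathbb{R}^d$ be a finite multiset of points (means) such that at least $\frac{7}{10}|P|$ of them are $\gamma$-good. Then the point returned by $\textsc{ComputeWinner}(P)$ is $5\gamma$-good.
   Context: $\mu=\frac1n\sum_{p\in A}p$, $\mathrm{Opt}=\sum_{p\in A}\|p-\mu\|^2$. A point $x$ is $\gamma$-good if $\|x-\mu\|\le\gamma\sqrt{\frac{\varepsilon\,\mathrm{Opt}}{n}}$. $\textsc{ComputeWinner}(P)$: for each $p_j\in P$ let $\rho_j$ be the distance from $p_j$ to its $\lceil\frac{7}{10}|P|\rceil$-th closest point of $P$, and $D_j=\sum_{p\in P,\ \|p-p_j\|\le\rho_j}\|p-p_j\|$; output a $p_j$ minimizing $D_j$. *)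

(* Defs.v *)
From mathcomp Require Import all_boot all_order all_algebra.
Set Implicit Arguments. Unset Strict Implicit. Unset Printing Implicit Defensive.
Import Order.TTheory GRing.Theory Num.Theory.
Local Open Scope ring_scope.

Section Defs.
Variables (R : rcfType) (d : nat).

Definition enorm (x : 'rV[R]_d) : R := Num.sqrt (\sum_(i < d) x ord0 i ^+ 2).
Definition edist (x y : 'rV[R]_d) : R := enorm (x - y).

(* Multisets of points are indexed families *)
Definition mean (n : nat) (A : 'I_n -> 'rV[R]_d) : 'rV[R]_d :=
  n%:R^-1 *: \sum_(i < n) A i.

Definition Opt (n : nat) (A : 'I_n -> 'rV[R]_d) : R :=
  \sum_(i < n) enorm (A i - mean A) ^+ 2.

Definition good (n : nat) (A : 'I_n -> 'rV[R]_d) (eps gamma : R) (x : 'rV[R]_d) : bool :=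
  enorm (x - mean A) <= gamma * Num.sqrt (eps * Opt A / n%:R).

(* ceil(7 m / 10) *)
Definition kwin (m : nat) : nat := ((7 * m + 9) %/ 10)%N.

(* rho_j: distance from P j to its ceil(7|P|/10)-th closest point of P
   (counted with multiplicity, P j itself included, 1-indexed) *)
Definition rho (m : nat) (P : 'I_m -> 'rV[R]_d) (j : 'I_m) : R :=
  nth 0 (sort <=%R [seq edist (P i) (P j) | i <- enum 'I_m]) (kwin m).-1.

Definition Dval (m : nat) (P : 'I_m -> 'rV[R]_d) (j : 'I_m) : R :=
  \sum_(i < m | edist (P i) (P j) <= rho P j) edist (P i) (P j).

(* ComputeWinner may return any minimizer of D *)
Definition is_winner (m : nat) (P : 'I_m -> 'rV[R]_d) (j : 'I_m) : Prop :=
  forall i : 'I_m, Dval P j <= Dval P i.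

End Defs.

(* Main.v *)
Require Import Defs.
From mathcomp Require Import all_boot all_order all_algebra ring lra zify.
Import Order.TTheory GRing.Theory Num.Theory.
Local Open Scope ring_scope.

Section N.
Variables (R : rcfType) (d : nat).

Lemma sum2M (f g : 'I_d -> R) :
  \sum_i \sum_j f i * g j = (\sum_i f i) * (\sum_j g j).
Proof. by rewrite mulr_suml; apply: eq_bigr => i _; rewrite mulr_sumr. Qed.

Lemma CS2 (x y : 'I_d -> R) :
  (\sum_i x i * y i) ^+ 2 <= (\sum_i x i ^+ 2) * (\sum_i y i ^+ 2).
Proof.
have H : 0 <= \sum_i \sum_j (x i * y j - x j * y i) ^+ 2.
  by apply: sumr_ge0 => i _; apply: sumr_ge0 => j _; apply: sqr_ge0.
have E : \sum_i \sum_j (x i * y j - x j * y i) ^+ 2 =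
   2 * ((\sum_i x i ^+ 2) * (\sum_i y i ^+ 2) - (\sum_i x i * y i) ^+ 2).
  rewrite (eq_bigr (fun i => \sum_j x i ^+ 2 * y j ^+ 2 + \sum_j y i ^+ 2 * x j ^+ 2
      - 2 * \sum_j ((x i * y i) * (x j * y j)))); last first.
    move=> i _; rewrite mulr_sumr -big_split -sumrB /=.
    by apply: eq_bigr => j _; ring.
  rewrite sumrB big_split /= -mulr_sumr !sum2M.
  ring.
have : 0 <= (\sum_i x i ^+ 2) * (\sum_i y i ^+ 2) - (\sum_i x i * y i) ^+ 2.
  by move: H; rewrite E pmulr_rge0.
by rewrite subr_ge0.
Qed.

Lemma enorm_ge0 (x : 'rV[R]_d) : 0 <= enorm x.
Proof. exact: sqrtr_ge0. Qed.

Lemma enormN (x : 'rV[R]_d) : enorm (- x) = enorm x.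
Proof. by rewrite /enorm; congr Num.sqrt; apply: eq_bigr => i _; rewrite mxE sqrrN. Qed.

Lemma enormD (x y : 'rV[R]_d) : enorm (x + y) <= enorm x + enorm y.
Proof.
set X := \sum_i x ord0 i ^+ 2; set Y := \sum_i y ord0 i ^+ 2.
set B := \sum_i x ord0 i * y ord0 i.
have X0 : 0 <= X by apply: sumr_ge0 => i _; apply: sqr_ge0.
have Y0 : 0 <= Y by apply: sumr_ge0 => i _; apply: sqr_ge0.
have E : \sum_i (x + y) ord0 i ^+ 2 = X + Y + 2 * B.
  rewrite /X /Y /B -!big_split /= mulr_sumr -big_split /=.
  by apply: eq_bigr => i _; rewrite mxE; ring.
have HB : B <= Num.sqrt X * Num.sqrt Y.
  rewrite -sqrtrM //; apply: le_trans (ler_norm B) _.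
  by rewrite -sqrtr_sqr ler_sqrt ?mulr_ge0 //; apply: CS2.
rewrite /enorm E -[X in X <= _]ger0_norm ?sqrtr_ge0 // -sqrtr_sqr.
rewrite -(ger0_norm (addr_ge0 (sqrtr_ge0 X) (sqrtr_ge0 Y))) -[`|_ + _|]sqrtr_sqr.
rewrite ler_sqrt ?sqr_ge0 // sqrrD !sqr_sqrtr //.
lra.
by rewrite -E; apply: sumr_ge0 => i _; apply: sqr_ge0.
Qed.
End N.

Section S.
Variable (R : rcfType).

Lemma sortedR (s : seq R) : sorted <=%R (sort <=%R s).
Proof. by apply: sort_sorted => x y; apply: le_total. Qed.

Lemma nth_le (s : seq R) i j : (i <= j < size s)%N ->
  nth 0 (sort <=%R s) i <= nth 0 (sort <=%R s) j.
Proof.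
move=> /andP[ij js].
apply: (sorted_leq_nth le_trans lexx) => //; first exact: sortedR.
  by rewrite inE size_sort; apply: leq_ltn_trans js.
by rewrite inE size_sort.
Qed.

Lemma rho_a (s : seq R) k (c : R) : (0 < k <= size s)%N ->
  (k <= count (fun v : R => (v <= c)%R) s)%N -> nth 0 (sort <=%R s) k.-1 <= c.
Proof.
move=> /andP[k0 ks] Hc; rewrite leNgt; apply/negP => Hlt.
move: Hc; rewrite -(count_sort <=%R) -(cat_take_drop k.-1 (sort _ s)) count_cat.
have -> : count (fun v => v <= c) (drop k.-1 (sort <=%R s)) = 0%N.
  rewrite (@eq_in_count _ _ pred0) ?count_pred0 //.
  move=> v /(nthP 0) [i Hi <-] /=.
  rewrite nth_drop; apply/negbTE; rewrite -ltNge.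
  apply: lt_le_trans Hlt _; apply: nth_le.
  by rewrite size_drop size_sort in Hi; rewrite leq_addr /= -ltn_subRL.
move=> H; have := count_size (fun v => v <= c) (take k.-1 (sort <=%R s)).
rewrite size_take size_sort; case: ifP => Hif; move: H Hif ks; case: k k0 {Hlt} => //= k _; lia.
Qed.

Lemma rho_b (s : seq R) k : (0 < k <= size s)%N ->
  (k <= count (fun v : R => (v <= nth 0 (sort <=%R s) k.-1)%R) s)%N.
Proof.
move=> /andP[k0 ks].
set t := nth 0 (sort <=%R s) k.-1.
rewrite -(count_sort <=%R) -(cat_take_drop k (sort _ s)) count_cat.
apply: leq_trans (leq_addr _ _).
have -> : count (fun v => v <= t) (take k (sort <=%R s)) =
   size (take k (sort <=%R s)).
  apply/eqP; rewrite -all_count; apply/(all_nthP 0) => i Hi.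
  rewrite nth_take; last by rewrite size_take size_sort in Hi; case: ifP Hi; lia.
  apply: nth_le; rewrite size_take size_sort in Hi *; case: ifP Hi; lia.
rewrite size_take size_sort; case: ifP => // Hif; lia.
Qed.
End S.
Lemma cnt (m : nat) (p : pred 'I_m) : count p (enum 'I_m) = #|[set i | p i]|.
Proof. by rewrite cardsE cardE /enum_mem size_filter /= count_filter; apply: eq_count => x /=; rewrite inE andbT. Qed.
Lemma kw m : (0 < m)%N -> (0 < kwin m <= m)%N /\ (10 * kwin m >= 7 * m)%N.
Proof. rewrite /kwin => h; lia. Qed.

Lemma sum_ind (m : nat) (R : rcfType) (T U : {set 'I_m}) (c : R) :
  \sum_(i in T) (if i \in U then c else 0) = c *+ #|T :&: U|.
Proof. by rewrite -big_mkcondr -sumr_const; apply: eq_bigl => i; rewrite inE. Qed.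

Lemma arith (m k t u a c1 c2 x1 x2 : nat) : (0 < m)%N -> (0 < k)%N -> (k <= m)%N ->
  (7 * m <= 10 * k)%N -> (7 * m <= 10 * a)%N -> (k <= t)%N ->
  (x1 + c1 = t + u)%N -> (x1 <= m)%N -> (x2 + c2 = t + a)%N -> (x2 <= m)%N ->
  (a <= u)%N -> (1 <= c1)%N /\ (u <= c1 + c2)%N.
Proof. lia. Qed.

Lemma fin (R : rcfType) (r dl a b u s DG DJ : R) : 0 <= r -> 0 < dl -> s <= u ->
  1 <= a -> u <= a + b -> DG <= 2 * r * s -> (2 * r + dl) * a + 2 * r * b <= DJ ->
  DJ <= DG -> False.
Proof.
move=> r0 dl0 su a1 uab h1 h2 h3.
have p1 : 0 <= r * (u - s) by rewrite mulr_ge0 // subr_ge0.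
have p2 : 0 <= r * (a + b - u) by rewrite mulr_ge0 // subr_ge0.
have p3 : 0 <= dl * (a - 1) by rewrite mulr_ge0 ?subr_ge0 // ltW.
lra.
Qed.

Theorem lemma4p4 (R : rcfType) (d n m : nat) (A : 'I_n -> 'rV[R]_d)
  (P : 'I_m -> 'rV[R]_d) (eps gamma : R) :
  (0 < n)%N -> (0 < m)%N -> 0 < eps -> 0 < gamma ->
  (7 * m <= 10 * #|[set i : 'I_m | good A eps gamma (P i)]|)%N ->
  forall j : 'I_m, is_winner P j -> good A eps (5 * gamma) (P j).
Proof.
move=> n0 m0 e0 g0 HW j Hj.
set W := [set i : 'I_m | good A eps gamma (P i)] in HW.
set mu := mean A.
set r := gamma * Num.sqrt (eps * Opt A / n%:R).
have r0 : 0 <= r by rewrite mulr_ge0 ?sqrtr_ge0 // ltW.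
have gW : forall i, i \in W -> enorm (P i - mu) <= r by move=> i; rewrite inE.
rewrite /good -mulrA -/r -/mu leNgt; apply/negP => Hfar.
set dl := enorm (P j - mu) - 5 * r.
have dl0 : 0 < dl by rewrite /dl subr_gt0.
have [/andP[k0 km] k7] := kw m m0.
set k := kwin m in k0 km k7.
have ka : (k <= #|W|)%N by rewrite /k /kwin; lia.
have [g gWg] : exists g, g \in W.
  by apply/set0Pn; rewrite -card_gt0; lia.
have tri : forall x y z : 'rV[R]_d, enorm (x - z) <= enorm (x - y) + enorm (y - z).
  by move=> x y z; have := @enormD R d (x - y) (y - z); rewrite addrA subrK.
have sym : forall x y : 'rV[R]_d, enorm (x - y) = enorm (y - x).
  by move=> x y; rewrite -(@enormN R d) opprB.
have sizeL : forall j0, size [seq edist (P i) (P j0) | i <- enum 'I_m] = m.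
  by move=> j0; rewrite size_map size_enum_ord.
have cntL : forall j0 c, count (fun v : R => (v <= c)%R) [seq edist (P i) (P j0) | i <- enum 'I_m]
   = #|[set i | edist (P i) (P j0) <= c]|.
  by move=> j0 c; rewrite count_map cnt.
have rg : rho P g <= 2 * r.
  apply: rho_a; first by rewrite sizeL k0 km.
  rewrite cntL; apply: leq_trans ka _; apply: subset_leq_card.
  apply/subsetP => i iW; rewrite inE /edist.
  apply: le_trans (tri _ mu _) _; rewrite (sym mu).
  by have := gW _ iW; have := gW _ gWg; lra.
set S := [set i | edist (P i) (P g) <= rho P g].
set T := [set i | edist (P i) (P j) <= rho P j].
set U := W :|: S.
have tk : (k <= #|T|)%N.
  by rewrite -cntL; apply: rho_b; rewrite sizeL k0 km.
have Dg : Dval P g <= (2 * r) *+ #|S|.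
  have -> : Dval P g = \sum_(i in S) edist (P i) (P g) by apply: eq_bigl => i; rewrite inE.
  rewrite -sumr_const.
  apply: ler_sum => i; rewrite inE => H; exact: le_trans H rg.
have dW : forall i, i \in W -> 4 * r + dl <= edist (P i) (P j).
  move=> i iW; have := tri (P j) (P i) mu; rewrite /edist (sym (P j) (P i)).
  by have := gW _ iW; rewrite /dl; lra.
have dS : forall i, i \in S -> 2 * r + dl <= edist (P i) (P j).
  move=> i; rewrite inE => iS.
  have h1 := tri (P i) (P g) mu; have := gW _ gWg.
  have := tri (P j) (P i) mu; rewrite /edist (sym (P j) (P i)) in iS *.
  by rewrite /dl; lra.
have Dj : (2 * r + dl) *+ #|T :&: U| + (2 * r) *+ #|T :&: W| <= Dval P j.
  have -> : Dval P j = \sum_(i in T) edist (P i) (P j) by apply: eq_bigl => i; rewrite inE.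
  rewrite -!sum_ind -big_split /=.
  apply: ler_sum => i _.
  have ed0 : 0 <= edist (P i) (P j) by apply: enorm_ge0.
  case: (boolP (i \in W)) => iW.
    have iU : i \in U by rewrite inE iW.
    by rewrite iU; have := dW _ iW; lra.
  case: (boolP (i \in U)) => iU; last by rewrite addr0.
  have iS : i \in S by move: iU; rewrite inE (negbTE iW).
  by rewrite addr0; apply: dS.
have c1 : (#|T :|: U| + #|T :&: U| = #|T| + #|U|)%N := cardsUI T U.
have c2 : (#|T :|: W| + #|T :&: W| = #|T| + #|W|)%N := cardsUI T W.
have m1 : (#|T :|: U| <= m)%N by have := max_card (T :|: U); rewrite card_ord.
have m2 : (#|T :|: W| <= m)%N by have := max_card (T :|: W); rewrite card_ord.
have su : (#|S| <= #|U|)%N by apply: subset_leq_card; apply: subsetUr.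
have wu : (#|W| <= #|U|)%N by apply: subset_leq_card; apply: subsetUl.
have [N1 N2] := @arith _ _ _ _ _ _ _ _ _ m0 k0 km k7 HW tk c1 m1 c2 m2 wu.
have HS : (#|S|%:R : R) <= #|U|%:R by rewrite ler_nat.
have H1 : (1 : R) <= #|T :&: U|%:R by rewrite -(ler_nat R 1) in N1.
have H2 : (#|U|%:R : R) <= #|T :&: U|%:R + #|T :&: W|%:R by rewrite -natrD ler_nat.
rewrite -mulr_natr in Dg.
rewrite -[(2 * r + dl) *+ _]mulr_natr -[(2 * r) *+ #|T :&: W|]mulr_natr in Dj.
have := @fin R r dl _ _ _ _ _ _ r0 dl0 HS H1 H2 Dg.
by move=> /(_ _ Dj (Hj g)).
Qed.
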